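(* For $0\le p\le1$, let $\mathcal{E}(p)$ be the qubit ensemble consisting of the states $|0\rangle,\ |1\rangle,\ (|0\rangle+|1\rangle)/\sqrt2,\ (|0\rangle-|1\rangle)/\sqrt2$ with probabilities $p/2,\ p/2,\ (1-p)/2,\ (1-p)/2$ respectively. Then $J(\mathcal{E}(p))=\frac34+\frac14|2p-1|$. In particular the BB84 ensemble $\mathcal{E}(1/2)$ has $J=3/4$.
   Context: Fidelity: $F(\rho,\sigma)=\big(\mathrm{tr}\sqrt{\rho^{1/2}\sigma\rho^{1/2}}\big)^2$. For an orthonormal basis $\{|j\rangle\}$ of $\mathbb{C}^2$ and state $\rho$, $\rho'=\sum_j\langle j|\rho|j\rangle|j\rangle\langle j|$. The ECCC of a finite ensemble is $J(\{q_i,\rho_i\})=\max_{\{|j\rangle\}}\sum_iq_iF(\rho_i,\rho_i')$, the maximum over all orthonormal bases of $\mathbb{C}^2$. Here $\{|0\rangle,|1\rangle\}$ is the computational basis. *)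

(* Defs.v *)
From Stdlib Require Import Reals Lra List ClassicalEpsilon.
Open Scope R_scope.

Record C := mkC { re : R; im : R }.
Definition C0 : C := mkC 0 0.
Definition C1 : C := mkC 1 0.
Definition RtoC (x : R) : C := mkC x 0.
Definition Cadd (a b : C) : C := mkC (re a + re b) (im a + im b).
Definition Cmul (a b : C) : C :=
  mkC (re a * re b - im a * im b) (re a * im b + im a * re b).
Definition Cconj (a : C) : C := mkC (re a) (- im a).

Record V2 := mkV { v0 : C; v1 : C }.
Record M2 := mkM { m00 : C; m01 : C; m10 : C; m11 : C }.

Definition M0 : M2 := mkM C0 C0 C0 C0.

Definition inner (u v : V2) : C :=
  Cadd (Cmul (Cconj (v0 u)) (v0 v)) (Cmul (Cconj (v1 u)) (v1 v)).

Definition mapply (A : M2) (x : V2) : V2 :=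
  mkV (Cadd (Cmul (m00 A) (v0 x)) (Cmul (m01 A) (v1 x)))
      (Cadd (Cmul (m10 A) (v0 x)) (Cmul (m11 A) (v1 x))).

Definition mmul (A B : M2) : M2 :=
  mkM (Cadd (Cmul (m00 A) (m00 B)) (Cmul (m01 A) (m10 B)))
      (Cadd (Cmul (m00 A) (m01 B)) (Cmul (m01 A) (m11 B)))
      (Cadd (Cmul (m10 A) (m00 B)) (Cmul (m11 A) (m10 B)))
      (Cadd (Cmul (m10 A) (m01 B)) (Cmul (m11 A) (m11 B))).

Definition madd (A B : M2) : M2 :=
  mkM (Cadd (m00 A) (m00 B)) (Cadd (m01 A) (m01 B))
      (Cadd (m10 A) (m10 B)) (Cadd (m11 A) (m11 B)).

Definition mscale (c : C) (A : M2) : M2 :=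
  mkM (Cmul c (m00 A)) (Cmul c (m01 A)) (Cmul c (m10 A)) (Cmul c (m11 A)).

Definition adjoint (A : M2) : M2 :=
  mkM (Cconj (m00 A)) (Cconj (m10 A)) (Cconj (m01 A)) (Cconj (m11 A)).

Definition trace (A : M2) : C := Cadd (m00 A) (m11 A).

Definition outer (u v : V2) : M2 :=
  mkM (Cmul (v0 u) (Cconj (v0 v))) (Cmul (v0 u) (Cconj (v1 v)))
      (Cmul (v1 u) (Cconj (v0 v))) (Cmul (v1 u) (Cconj (v1 v))).

Definition psd (A : M2) : Prop :=
  adjoint A = A /\ forall x : V2, 0 <= re (inner x (mapply A x)).

Definition msqrt (A : M2) : M2 :=
  epsilon (inhabits M0) (fun S => psd S /\ mmul S S = A).

(* Uhlmann fidelity F(rho,sigma) = (tr sqrt(rho^{1/2} sigma rho^{1/2}))^2;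
   the trace of a PSD matrix is real, so we take its real part. *)
Definition fidelity (rho sigma : M2) : R :=
  let r := msqrt rho in re (trace (msqrt (mmul r (mmul sigma r)))) ^ 2.

Definition orthonormal (u v : V2) : Prop :=
  inner u u = C1 /\ inner v v = C1 /\ inner u v = C0.

Definition dephase (u v : V2) (rho : M2) : M2 :=
  madd (mscale (inner u (mapply rho u)) (outer u u))
       (mscale (inner v (mapply rho v)) (outer v v)).

(* a finite ensemble: list of (probability, state) *)
Definition ensemble := list (R * M2).

Definition eccc_obj (E : ensemble) (u v : V2) : R :=
  fold_right (fun qr acc => fst qr * fidelity (snd qr) (dephase u v (snd qr)) + acc)
             0 E.

Definition is_ECCC (E : ensemble) (J : R) : Prop :=
  (forall u v, orthonormal u v -> eccc_obj E u v <= J) /\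
  (exists u v, orthonormal u v /\ eccc_obj E u v = J).

Definition ket0 : V2 := mkV C1 C0.
Definition ket1 : V2 := mkV C0 C1.
Definition ketp : V2 := mkV (RtoC (/ sqrt 2)) (RtoC (/ sqrt 2)).
Definition ketm : V2 := mkV (RtoC (/ sqrt 2)) (RtoC (- / sqrt 2)).
Definition proj (u : V2) : M2 := outer u u.

Definition Ep (p : R) : ensemble :=
  (p / 2, proj ket0) :: (p / 2, proj ket1) ::
  ((1 - p) / 2, proj ketp) :: ((1 - p) / 2, proj ketm) :: nil.

(* Main.v *)
Require Import Defs.
From Stdlib Require Import Reals Lra Psatz ClassicalEpsilon List.
Open Scope R_scope.

Lemma msqrt_spec A : (exists S, psd S /\ mmul S S = A) ->
  psd (msqrt A) /\ mmul (msqrt A) (msqrt A) = A.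
Proof. intro H. unfold msqrt. apply (epsilon_spec (inhabits M0) (fun S => psd S /\ mmul S S = A)). exact H. Qed.

Lemma psd_form S : psd S -> exists x y al be,
  S = mkM (mkC x 0) (mkC al be) (mkC al (-be)) (mkC y 0) /\ 0 <= x /\ 0 <= y.
Proof.
  destruct S as [[a b] [c d] [e f] [g h]]. intros [Hadj Hp].
  unfold adjoint, Cconj in Hadj; simpl in Hadj. injection Hadj. intros.
  assert (b = 0) by lra. assert (h = 0) by lra. subst.
  exists a, g, e, d. split. reflexivity.
  split.
  - specialize (Hp (mkV Defs.C1 Defs.C0)). simpl in Hp. lra.
  - specialize (Hp (mkV Defs.C0 Defs.C1)). simpl in Hp. lra.
Qed.

Ltac brute := repeat match goal with
  | z : M2 |- _ => destruct z
  | z : V2 |- _ => destruct z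
  | z : Defs.C |- _ => destruct z end;
  unfold mmul, mscale, outer, inner, mapply, adjoint, trace, Cadd, Cmul, Cconj, RtoC, Defs.C1, Defs.C0 in *; simpl in *.

Lemma outer_sq u : mmul (outer u u) (outer u u) = mscale (inner u u) (outer u u).
Proof. brute. f_equal; f_equal; ring. Qed.
Lemma mscale_C1 A : mscale Defs.C1 A = A.
Proof. brute. f_equal; f_equal; ring. Qed.
Lemma sandwich u s : mmul (outer u u) (mmul s (outer u u)) = mscale (inner u (mapply s u)) (outer u u).
Proof. brute. f_equal; f_equal; ring. Qed.
Lemma scale_sq k A : mmul (mscale k A) (mscale k A) = mscale (Cmul k k) (mmul A A).
Proof. brute. f_equal; f_equal; ring. Qed.

Lemma psd_outer u : psd (outer u u).
Proof.
  split. brute. f_equal; f_equal; ring.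
  intro x. destruct u as [[a b] [c d]], x as [[e f] [g h]]. brute.
  match goal with |- 0 <= ?E => 
   replace E with ((a*e + b*f + c*g+d*h)^2 + (a*f - b*e + c*h - d*g)^2) by ring end.
  apply Rplus_le_le_0_compat; apply pow2_ge_0.
Qed.
Lemma psd_scale c A : 0 <= c -> psd A -> psd (mscale (RtoC c) A).
Proof.
  intros Hc [Ha Hp]. split.
  - rewrite <- Ha at 2. brute. f_equal; f_equal; ring.
  - intro x. specialize (Hp x). brute. nra.
Qed.

Definition reDet (M : M2) := re (Cmul (m00 M) (m11 M)) - re (Cmul (m01 M) (m10 M)).
Lemma det_outer u : reDet (outer u u) = 0.
Proof. unfold reDet. brute. ring. Qed.
Lemma det_scale_outer c u : reDet (mscale (RtoC c) (outer u u)) = 0.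
Proof. unfold reDet. brute. ring. Qed.
Lemma tr_outer u : re (trace (outer u u)) = re (inner u u).
Proof. brute. ring. Qed.
Lemma tr_scale_outer c u : re (trace (mscale (RtoC c) (outer u u))) = c * re (inner u u).
Proof. brute. ring. Qed.
Lemma sq_form x y al be : mmul (mkM (mkC x 0) (mkC al be) (mkC al (-be)) (mkC y 0))
   (mkM (mkC x 0) (mkC al be) (mkC al (-be)) (mkC y 0)) =
   mkM (mkC (x*x+al*al+be*be) 0) (mkC ((x+y)*al) ((x+y)*be)) (mkC ((x+y)*al) (-((x+y)*be))) (mkC (al*al+be*be+y*y) 0).
Proof. brute. f_equal; f_equal; ring. Qed.

Lemma fid_pure u s c : inner u u = Defs.C1 -> inner u (mapply s u) = RtoC c -> 0 <= c ->
  fidelity (outer u u) s = c.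
Proof.
 intros Hu Hs Hc.
 set (Pm := outer u u).
 assert (HPP : mmul Pm Pm = Pm) by (unfold Pm; rewrite outer_sq, Hu; apply mscale_C1).
 destruct (msqrt_spec Pm) as [Hr1 Hr2]. { exists Pm; split; [apply psd_outer | exact HPP]. }
 assert (Hr : msqrt Pm = Pm).
 { destruct (psd_form _ Hr1) as (x&y&al&be&Hf&Hx&Hy).
   pose proof (det_outer u) as Hd. pose proof (tr_outer u) as Ht. fold Pm in Hd, Ht.
   rewrite Hu in Ht; change (re Defs.C1) with 1 in Ht.
   rewrite Hf. rewrite <- Hr2 in Hd, Ht |- *. rewrite Hf in Hd, Ht |- *. rewrite sq_form in *.
   unfold reDet, trace, Cmul, Cadd in *; simpl in *.
   assert (H1 : x*y - al*al - be*be = 0) by nra.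
   assert (H2 : x+y = 1) by nra.
   f_equal; f_equal; nra. }
 unfold fidelity. rewrite Hr. unfold Pm; rewrite sandwich, Hs. fold Pm.
 destruct (msqrt_spec (mscale (RtoC c) Pm)) as [Hs1 Hs2].
 { exists (mscale (RtoC (sqrt c)) Pm). split. apply psd_scale; [apply sqrt_pos | apply psd_outer].
   rewrite scale_sq, HPP. f_equal. unfold Cmul, RtoC; simpl. f_equal. rewrite sqrt_sqrt; lra. ring. }
 destruct (psd_form _ Hs1) as (x&y&al&be&Hf&Hx&Hy).
 pose proof (det_scale_outer c u) as Hd. pose proof (tr_scale_outer c u) as Ht. fold Pm in Hd, Ht.
 rewrite Hu in Ht; change (re Defs.C1) with 1 in Ht.
 rewrite <- Hs2 in Hd, Ht. rewrite Hf in Hd, Ht |- *. rewrite sq_form in *.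
 unfold reDet, trace, Cmul, Cadd in *; simpl in *.
 assert (H1 : x*y - al*al - be*be = 0) by nra.
 nra.
Qed.

Definition nsq (z : Defs.C) := re z * re z + im z * im z.
Lemma lin_add u A B : inner u (mapply (madd A B) u) = Cadd (inner u (mapply A u)) (inner u (mapply B u)).
Proof. destruct u as [[a b] [c d]], A as [[a1 b1] [c1 d1] [e1 f1] [g1 h1]], B as [[a2 b2] [c2 d2] [e2 f2] [g2 h2]].
  unfold inner, mapply, madd, Cadd, Cmul, Cconj; simpl. f_equal; ring. Qed.
Lemma lin_scale u k A : inner u (mapply (mscale k A) u) = Cmul k (inner u (mapply A u)).
Proof. destruct u as [[a b] [c d]], k as [k1 k2], A as [[a1 b1] [c1 d1] [e1 f1] [g1 h1]].
  unfold inner, mapply, mscale, Cadd, Cmul, Cconj; simpl. f_equal; ring. Qed.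
Lemma q_outer u a : inner u (mapply (outer a a) u) = RtoC (nsq (inner a u)).
Proof. destruct u as [[a1 b1] [c1 d1]], a as [[a2 b2] [c2 d2]].
  unfold nsq, inner, mapply, outer, RtoC, Cadd, Cmul, Cconj; simpl. f_equal; ring. Qed.
Lemma nsq_sym u a : nsq (inner u a) = nsq (inner a u).
Proof. destruct u as [[a1 b1] [c1 d1]], a as [[a2 b2] [c2 d2]].
  unfold nsq, inner, Cadd, Cmul, Cconj; simpl. ring. Qed.

Lemma deph_val u a b : inner u (mapply (dephase a b (outer u u)) u) =
  RtoC ((nsq (inner a u))^2 + (nsq (inner b u))^2).
Proof.
  unfold dephase. rewrite lin_add, !lin_scale, !q_outer, (nsq_sym u a), (nsq_sym u b). unfold RtoC, Cadd, Cmul. simpl. f_equal; ring.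
Qed.

Lemma fid_term u a b : inner u u = Defs.C1 ->
  fidelity (proj u) (dephase a b (proj u)) = (nsq (inner a u))^2 + (nsq (inner b u))^2.
Proof.
  intro Hu. unfold proj. apply fid_pure; auto. apply deph_val.
  unfold nsq. nra.
Qed.
Lemma key p0 q0 p1 q1 r0 s0 r1 s1 :
  p0*p0+q0*q0+p1*p1+q1*q1 = 1 -> r0*r0+s0*s0+r1*r1+s1*s1 = 1 ->
  p0*r0 + q0*s0 + p1*r1 + q1*s1 = 0 -> p0*s0 - q0*r0 + p1*s1 - q1*r1 = 0 ->
  r0*r0+s0*s0 = p1*p1+q1*q1 /\ r0*r1 + s0*s1 = -(p0*p1+q0*q1).
Proof.
  intros Ha Hb Wr Wi.
  remember (p0*r1 - q0*s1 - p1*r0 + q1*s0) as Dr eqn:EDr.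
  remember (p0*s1 + q0*r1 - p1*s0 - q1*r0) as Di eqn:EDi.
  assert (HD : Dr*Dr + Di*Di = 1).
  { assert (E: (p0*r0 + q0*s0 + p1*r1 + q1*s1)^2 + (p0*s0 - q0*r0 + p1*s1 - q1*r1)^2 + Dr*Dr+Di*Di
      = (p0*p0+q0*q0+p1*p1+q1*q1)*(r0*r0+s0*s0+r1*r1+s1*s1)) by (subst; ring).
    rewrite Wr, Wi, Ha, Hb in E. lra. }
  assert (Er0 : r0 = -(Dr*p1 + Di*q1)).
  { assert (E : r0 + (Dr*p1 + Di*q1) = r0*(1 - (p0*p0+q0*q0+p1*p1+q1*q1)) + p0*(p0*r0 + q0*s0 + p1*r1 + q1*s1) - q0*(p0*s0 - q0*r0 + p1*s1 - q1*r1)) by (subst; ring).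
    rewrite Wr, Wi, Ha in E. lra. }
  assert (Es0 : s0 = Dr*q1 - Di*p1).
  { assert (E : s0 - (Dr*q1 - Di*p1) = s0*(1 - (p0*p0+q0*q0+p1*p1+q1*q1)) + q0*(p0*r0 + q0*s0 + p1*r1 + q1*s1) + p0*(p0*s0 - q0*r0 + p1*s1 - q1*r1)) by (subst; ring).
    rewrite Wr, Wi, Ha in E. lra. }
  assert (Er1 : r1 = Dr*p0 + Di*q0).
  { assert (E : r1 - (Dr*p0 + Di*q0) = r1*(1 - (p0*p0+q0*q0+p1*p1+q1*q1)) + p1*(p0*r0 + q0*s0 + p1*r1 + q1*s1) - q1*(p0*s0 - q0*r0 + p1*s1 - q1*r1)) by (subst; ring).
    rewrite Wr, Wi, Ha in E. lra. }
  assert (Es1 : s1 = Di*p0 - Dr*q0).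
  { assert (E : s1 - (Di*p0 - Dr*q0) = s1*(1 - (p0*p0+q0*q0+p1*p1+q1*q1)) + q1*(p0*r0 + q0*s0 + p1*r1 + q1*s1) + p1*(p0*s0 - q0*r0 + p1*s1 - q1*r1)) by (subst; ring).
    rewrite Wr, Wi, Ha in E. lra. }
  clear EDr EDi. rewrite Er0, Es0, Er1, Es1. split.
  - replace ((- (Dr * p1 + Di * q1)) * (- (Dr * p1 + Di * q1)) + (Dr * q1 - Di * p1) * (Dr * q1 - Di * p1)) with ((Dr*Dr+Di*Di)*(p1*p1+q1*q1)) by ring. rewrite HD; ring.
  - replace (- (Dr * p1 + Di * q1) * (Dr * p0 + Di * q0) + (Dr * q1 - Di * p1) * (Di * p0 - Dr * q0)) with (-((Dr*Dr+Di*Di)*(p0*p1+q0*q1))) by ring. rewrite HD; ring.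
Qed.

Lemma hh : / sqrt 2 * / sqrt 2 = / 2.
Proof. rewrite <- Rinv_mult. rewrite sqrt_sqrt; lra. Qed.

Lemma unit0 : inner ket0 ket0 = Defs.C1.
Proof. unfold inner, ket0; brute; f_equal; ring. Qed.
Lemma unit1 : inner ket1 ket1 = Defs.C1.
Proof. unfold inner, ket1; brute; f_equal; ring. Qed.
Lemma unitp : inner ketp ketp = Defs.C1.
Proof. unfold inner, ketp; brute; f_equal. 2: ring.
  pose proof hh as H. set (h := / sqrt 2) in *.
  transitivity (2*(h*h)); [ring | rewrite H; field]. Qed.
Lemma unitm : inner ketm ketm = Defs.C1.
Proof. unfold inner, ketm; brute; f_equal. 2: ring.
  pose proof hh as H. set (h := / sqrt 2) in *.
  transitivity (2*(h*h)); [ring | rewrite H; field]. Qed.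

Lemma nsq0 p0 q0 p1 q1 : nsq (inner (mkV (mkC p0 q0) (mkC p1 q1)) ket0) = p0*p0+q0*q0.
Proof. unfold nsq, inner, ket0; brute; ring. Qed.
Lemma nsq1 p0 q0 p1 q1 : nsq (inner (mkV (mkC p0 q0) (mkC p1 q1)) ket1) = p1*p1+q1*q1.
Proof. unfold nsq, inner, ket1; brute; ring. Qed.
Lemma nsqp p0 q0 p1 q1 : nsq (inner (mkV (mkC p0 q0) (mkC p1 q1)) ketp) = ((p0+p1)*(p0+p1)+(q0+q1)*(q0+q1))/2.
Proof. unfold nsq, inner, ketp; brute.
  pose proof hh as H. set (h := / sqrt 2) in *.
  transitivity ((h*h)*((p0+p1)*(p0+p1)+(q0+q1)*(q0+q1))); [ring | rewrite H; field]. Qed.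
Lemma nsqm p0 q0 p1 q1 : nsq (inner (mkV (mkC p0 q0) (mkC p1 q1)) ketm) = ((p0-p1)*(p0-p1)+(q0-q1)*(q0-q1))/2.
Proof. unfold nsq, inner, ketm; brute.
  pose proof hh as H. set (h := / sqrt 2) in *.
  transitivity ((h*h)*((p0-p1)*(p0-p1)+(q0-q1)*(q0-q1))); [ring | rewrite H; field]. Qed.

Lemma obj_formula p a b : eccc_obj (Ep p) a b =
  p/2 * ((nsq (inner a ket0))^2 + (nsq (inner b ket0))^2) +
  (p/2 * ((nsq (inner a ket1))^2 + (nsq (inner b ket1))^2) +
  ((1-p)/2 * ((nsq (inner a ketp))^2 + (nsq (inner b ketp))^2) +
  ((1-p)/2 * ((nsq (inner a ketm))^2 + (nsq (inner b ketm))^2) + 0))).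
Proof.
  unfold eccc_obj, Ep. cbn [fold_right fst snd].
  rewrite !fid_term; auto using unit0, unit1, unitp, unitm.
Qed.

Lemma obj_val p p0 q0 p1 q1 r0 s0 r1 s1 :
  orthonormal (mkV (mkC p0 q0) (mkC p1 q1)) (mkV (mkC r0 s0) (mkC r1 s1)) ->
  eccc_obj (Ep p) (mkV (mkC p0 q0) (mkC p1 q1)) (mkV (mkC r0 s0) (mkC r1 s1)) =
  p * ((p0*p0+q0*q0)^2 + (p1*p1+q1*q1)^2) +
  (1-p) * ((((p0+p1)*(p0+p1)+(q0+q1)*(q0+q1))/2)^2 + (((p0-p1)*(p0-p1)+(q0-q1)*(q0-q1))/2)^2)
  /\ p0*p0+q0*q0+p1*p1+q1*q1 = 1.
Proof.
  intros (Haa & Hbb & Hab).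
  unfold inner, Cadd, Cmul, Cconj, Defs.C1, Defs.C0 in Haa, Hbb, Hab; simpl in Haa, Hbb, Hab.
  injection Haa; injection Hbb; injection Hab; intros.
  destruct (key p0 q0 p1 q1 r0 s0 r1 s1) as [K1 K2]; try lra.
  split; [| lra].
  rewrite obj_formula, !nsq0, !nsq1, !nsqp, !nsqm.
  assert (B1 : r1*r1+s1*s1 = p0*p0+q0*q0) by lra.
  replace ((r0+r1)*(r0+r1)+(s0+s1)*(s0+s1)) with ((r0*r0+s0*s0) + (r1*r1+s1*s1) + 2*(r0*r1+s0*s1)) by ring.
  replace ((r0-r1)*(r0-r1)+(s0-s1)*(s0-s1)) with ((r0*r0+s0*s0) + (r1*r1+s1*s1) - 2*(r0*r1+s0*s1)) by ring.
  rewrite K1, K2, B1. field.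
Qed.
Lemma final p A0 A1 c : 0 <= p <= 1 -> A0 + A1 = 1 -> 0 <= A0 -> 0 <= A1 -> c*c <= A0*A1 ->
  p*(A0^2+A1^2) + (1-p)*(((A0+A1+2*c)/2)^2+((A0+A1-2*c)/2)^2) <= 3/4 + 1/4*Rabs(2*p-1).
Proof.
  intros Hp HA H0 H1 Hc.
  assert (E : A1 = 1 - A0) by lra. rewrite E in *.
  assert (Hz : (2*A0-1)^2 + 4*(c*c) <= 1) by nra.
  assert (F : p*(A0^2+(1-A0)^2) + (1-p)*(((A0+(1-A0)+2*c)/2)^2+((A0+(1-A0)-2*c)/2)^2)
    = 1/2 + (p*(2*A0-1)^2 + (1-p)*(4*(c*c)))/2) by field.
  rewrite F.
  destruct (Rle_dec (1/2) p).
  - rewrite Rabs_right by lra.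
    assert (0 <= (p - (1-p)) * (4*(c*c))) by (apply Rmult_le_pos; nra).
    assert (0 <= p * (1 - (2*A0-1)^2 - 4*(c*c))) by (apply Rmult_le_pos; lra).
    lra.
  - rewrite Rabs_left by lra.
    assert (0 <= ((1-p) - p) * (2*A0-1)^2) by (apply Rmult_le_pos; [lra | apply pow2_ge_0]).
    assert (0 <= (1-p) * (1 - (2*A0-1)^2 - 4*(c*c))) by (apply Rmult_le_pos; lra).
    lra.
Qed.

Lemma ortho01 : orthonormal ket0 ket1.
Proof. split; [apply unit0 | split; [apply unit1|]]. unfold inner, ket0, ket1; brute; f_equal; ring. Qed.
Lemma orthopm : orthonormal ketp ketm.
Proof. split; [apply unitp | split; [apply unitm|]]. unfold inner, ketp, ketm; brute; f_equal; ring. Qed.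

Theorem mainTheorem5 :
  (forall p : R, 0 <= p <= 1 ->
     is_ECCC (Ep p) (3 / 4 + 1 / 4 * Rabs (2 * p - 1))) /\
  is_ECCC (Ep (1 / 2)) (3 / 4).
Proof.
  assert (Main : forall p : R, 0 <= p <= 1 ->
     is_ECCC (Ep p) (3 / 4 + 1 / 4 * Rabs (2 * p - 1))).
  { intros p Hp. split.
    - intros [[p0 q0] [p1 q1]] [[r0 s0] [r1 s1]] Hon.
      destruct (obj_val p _ _ _ _ _ _ _ _ Hon) as [E N]. rewrite E.
      replace ((p0 * p0 + q0 * q0 + p1 * p1 + q1 * q1)) with ((p0*p0+q0*q0) + (p1*p1+q1*q1)) in N by ring.
      replace ((p0 + p1) * (p0 + p1) + (q0 + q1) * (q0 + q1)) with ((p0*p0+q0*q0) + (p1*p1+q1*q1) + 2*(p0*p1+q0*q1)) by ring.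
      replace ((p0 - p1) * (p0 - p1) + (q0 - q1) * (q0 - q1)) with ((p0*p0+q0*q0) + (p1*p1+q1*q1) - 2*(p0*p1+q0*q1)) by ring.
      apply final; auto; try nra.
      assert (0 <= (p0*q1 - q0*p1)^2) by apply pow2_ge_0. nra.
    - destruct (Rle_dec (1/2) p).
      + exists ket0, ket1. split. apply ortho01.
        change ket0 with (mkV (mkC 1 0) (mkC 0 0)). change ket1 with (mkV (mkC 0 0) (mkC 1 0)).
        destruct (obj_val p _ _ _ _ _ _ _ _ ortho01) as [E _].
        rewrite E. rewrite Rabs_right by lra. field.
      + exists ketp, ketm. split. apply orthopm.
        pose proof (obj_val p (/sqrt 2) 0 (/sqrt 2) 0 (/sqrt 2) 0 (- /sqrt 2) 0 orthopm) as [E _].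
        change ketp with (mkV (mkC (/sqrt 2) 0) (mkC (/sqrt 2) 0)).
        change ketm with (mkV (mkC (/sqrt 2) 0) (mkC (- /sqrt 2) 0)).
        rewrite E. rewrite Rabs_left by lra.
        pose proof hh as H. set (h := / sqrt 2) in *.
        transitivity (p*(2*(h*h)^2) + (1-p)*((2*(h*h))^2)); [field | rewrite H; field]. }
  split; [exact Main|].
  replace (3/4) with (3 / 4 + 1 / 4 * Rabs (2 * (1/2) - 1)).
  apply Main; lra.
  replace (2 * (1/2) - 1) with 0 by field. rewrite Rabs_R0. ring.
Qed.
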